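(* Let $\{1,\mu_1,\mu_2,\mu_3\}$ be a quaternion basis ($\mu_1,\mu_2$ orthogonal pure unit quaternions, $\mu_3=\mu_1\mu_2$), and let $q=z_1+z_2\mu_2$ with $z_1,z_2$ random variables in $\mathbb{C}_{\mu_1}$ be a centered quaternion Gaussian random variable which is $(\mu_1,1)$-proper, i.e. $q\stackrel{d}{=}\mu_1 q$. Let ${\bf q}_{\mathbb{C}}=[z_1,z_1^{\star},z_2,z_2^{\star}]^T$. Then $$\mathbb{E}[{\bf q}_{\mathbb{C}}{\bf q}_{\mathbb{C}}^{\dagger}]=\begin{bmatrix}\sigma^2 & 0 & \omega & 0\\ 0 & \sigma^2 & 0 & \omega^{\star}\\ \omega^{\star} & 0 & \varsigma^2 & 0\\ 0 & \omega & 0 & \varsigma^2\end{bmatrix},$$ where $\sigma^2=\mathbb{E}[|z_1|^2]\in\mathbb{R}$, $\varsigma^2=\mathbb{E}[|z_2|^2]\in\mathbb{R}$ and $\omega=\mathbb{E}[z_1z_2^{\star}]\in\mathbb{C}_{\mu_1}$.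
   Context: $\mathbb{H}$ denotes the quaternions; $\mathbb{C}_{\mu_1}=\mathbb{R}\oplus\mu_1\mathbb{R}$ is the commutative subfield isomorphic to $\mathbb{C}$; $^{\star}$ denotes conjugation and $\dagger$ conjugate transpose. A quaternion Gaussian random variable is one whose four real components are jointly Gaussian; centered means $\mathbb{E}[q]=0$. $\stackrel{d}{=}$ denotes equality in distribution. *)

(* Defs.v *)
From HB Require Import structures.
From mathcomp Require Import all_boot all_order all_algebra.
From mathcomp Require Import all_classical all_reals all_analysis.
Set Implicit Arguments. Unset Strict Implicit. Unset Printing Implicit Defensive.
Import Order.TTheory GRing.Theory Num.Theory.
Local Open Scope classical_set_scope.
Local Open Scope ring_scope.

Record quat (R : Type) := Quat { qr : R; qi : R; qj : R; qk : R }.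
Arguments qr {R}. Arguments qi {R}. Arguments qj {R}. Arguments qk {R}. Arguments Quat {R}.

Section Quat.
Variable R : realType.
Definition qzero : quat R := Quat 0 0 0 0.
Definition qreal (a : R) : quat R := Quat a 0 0 0.
Definition qadd (p q : quat R) : quat R :=
  Quat (qr p + qr q) (qi p + qi q) (qj p + qj q) (qk p + qk q).
Definition qscale (a : R) (p : quat R) : quat R :=
  Quat (a * qr p) (a * qi p) (a * qj p) (a * qk p).
Definition qmul (p q : quat R) : quat R :=
  Quat (qr p * qr q - qi p * qi q - qj p * qj q - qk p * qk q)
       (qr p * qi q + qi p * qr q + qj p * qk q - qk p * qj q)
       (qr p * qj q - qi p * qk q + qj p * qr q + qk p * qi q)
       (qr p * qk q + qi p * qj q - qj p * qi q + qk p * qr q).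
Definition qconj (p : quat R) : quat R := Quat (qr p) (- qi p) (- qj p) (- qk p).
Definition qdot (p q : quat R) : R :=
  qr p * qr q + qi p * qi q + qj p * qj q + qk p * qk q.
Definition qnorm2 (p : quat R) : R := qdot p p.
Definition pure (p : quat R) : Prop := qr p = 0.
Definition unit_quat (p : quat R) : Prop := qnorm2 p = 1.
Definition quat_basis (mu1 mu2 : quat R) : Prop :=
  [/\ pure mu1, pure mu2, unit_quat mu1, unit_quat mu2 & qdot mu1 mu2 = 0].
Definition in_Cmu (mu1 p : quat R) : Prop :=
  exists a b : R, p = qadd (qreal a) (qscale b mu1).
Definition vec4 (p : quat R) : (R * R) * (R * R) := ((qr p, qi p), (qj p, qk p)).
End Quat.

Section Prob.
Context {d : measure_display} {T : measurableType d} {R : realType}.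
Variable P : probability T R.

Definition quat_rv (X : T -> quat R) : Prop :=
  [/\ measurable_fun setT (qr \o X), measurable_fun setT (qi \o X),
      measurable_fun setT (qj \o X) & measurable_fun setT (qk \o X)].

Definition real_gaussian (X : T -> R) : Prop :=
  exists m s : R,
    (s = 0 /\ forall A, measurable A -> P (X @^-1` A) = \d_m A) \/
    (0 < s /\ forall A, measurable A -> P (X @^-1` A) = normal_prob m s A).

(** the four real components are jointly Gaussian: every real linear
    combination of them is Gaussian *)
Definition quat_gaussian (X : T -> quat R) : Prop :=
  quat_rv X /\ forall c0 c1 c2 c3 : R,
    real_gaussian (fun w => c0 * qr (X w) + c1 * qi (X w)
                            + c2 * qj (X w) + c3 * qk (X w)).

Definition qexpect (X : T -> quat R) : quat R :=
  Quat (fine ('E_P[qr \o X])%E) (fine ('E_P[qi \o X])%E)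
       (fine ('E_P[qj \o X])%E) (fine ('E_P[qk \o X])%E).

Definition centered (X : T -> quat R) : Prop :=
  [/\ ('E_P[qr \o X] = 0)%E, ('E_P[qi \o X] = 0)%E,
      ('E_P[qj \o X] = 0)%E & ('E_P[qk \o X] = 0)%E].

Definition quat_eq_dist (X Y : T -> quat R) : Prop :=
  forall A : set ((R * R) * (R * R)), measurable A ->
    P ((@vec4 R \o X) @^-1` A) = P ((@vec4 R \o Y) @^-1` A).
End Prob.

(* Main.v *)
Require Import Defs.
From HB Require Import structures.
From mathcomp Require Import all_boot all_order all_algebra.
From mathcomp Require Import all_classical all_reals all_analysis.
From mathcomp Require Import measurable_realfun.
From mathcomp Require Import ring lra.
Set Implicit Arguments. Unset Strict Implicit. Unset Printing Implicit Defensive.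
Import Order.TTheory GRing.Theory Num.Theory.
Local Open Scope classical_set_scope.
Local Open Scope ring_scope.

Lemma fine_xx (R : realType) (x : \bar R) : fine (x - x)%E = 0.
Proof. by case: x => [r| |] //=; rewrite subrr. Qed.

Lemma sym_zero d (T : measurableType d) (R : realType) (P : probability T R)
  d' (Y : measurableType d') (U : T -> Y) (rot : Y -> Y) (h : Y -> R) :
  measurable_fun setT U -> measurable_fun setT rot -> measurable_fun setT h ->
  (forall A, measurable A -> P (U @^-1` A) = P ((rot \o U) @^-1` A)) ->
  (forall y, h (rot y) = - h y) ->
  fine ('E_P[h \o U])%E = 0.
Proof.
move=> mU mrot mh dist hrot.
have mrU : measurable_fun setT (rot \o U) by exact: measurableT_comp.
have key : forall G : Y -> \bar R, measurable_fun setT G -> (forall y, (0 <= G y)%E) ->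
   (\int[P]_w G (U w) = \int[P]_w G (rot (U w)))%E.
  move=> G mG G0.
  have e1 := ge0_integral_pushforward mU P (D:=setT) measurableT mG (fun y _ => G0 y).
  have e2 := ge0_integral_pushforward mrU P (D:=setT) measurableT mG (fun y _ => G0 y).
  rewrite !preimage_setT in e1 e2.
  rewrite -[LHS]e1 -[RHS]e2.
  apply: eq_measure_integral => A mA _.
  exact: (dist A mA).
rewrite unlock integralE.
set F := fun y : Y => ((h y)%:E)%E.
have -> : (fun x0 : T => ((h \o U) x0)%:E)%E = F \o U by [].
rewrite funepos_comp funeneg_comp.
have -> : (F^\- = F^\+ \o rot)%E.
  apply/funext => y /=; rewrite funenegE funeposE /F hrot EFinN //.
have mF : measurable_fun setT F by apply/measurable_EFinP.
have mFp : measurable_fun setT (F^\+)%E by exact: measurable_funepos.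
have -> : (\int[P]_x ((F^\+ \o rot) \o U) x = \int[P]_x (F^\+ \o U) x)%E.
  exact: (esym (key _ mFp (fun y => funepos_ge0 _ y))).
exact: fine_xx.
Qed.


Lemma hA (R : realType) (k : R) (X Y : \bar R) : 0 <= k -> (0 <= X)%E -> (0 <= Y)%E ->
  fine (k%:E * X - k%:E * Y)%E = k * fine (X - Y)%E.
Proof.
move=> k0; rewrite le_eqVlt in k0; case/orP: k0 => [/eqP<-|kp].
  by rewrite !mul0e subee // mul0r.
case: X => [x| |] //; case: Y => [y| |] // _ _ /=.
- by rewrite mulrBr.
- by rewrite mulry (gtr0_sg kp) mul1e /= mulr0.
- by rewrite mulry (gtr0_sg kp) mul1e /= mulr0.
- by rewrite mulry (gtr0_sg kp) mul1e /= mulr0.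
Qed.

Lemma hB (R : realType) (X Y : \bar R) : (0 <= X)%E -> (0 <= Y)%E ->
  fine (Y - X)%E = - fine (X - Y)%E.
Proof.
case: X => [x| |] //; case: Y => [y| |] // _ _ /=; rewrite ?oppr0 //.
by rewrite opprB.
Qed.

Lemma fine_scale d (T : measurableType d) (R : realType) (P : probability T R)
  (f : T -> R) (k : R) : measurable_fun setT f ->
  fine ('E_P[fun w => (k * f w)%R])%E = k * fine ('E_P[f])%E.
Proof.
move=> mf; rewrite unlock.
set G := fun w => (f w)%:E.
have mG : measurable_fun setT G by apply/measurable_EFinP.
have -> : (fun w => ((k * f w)%R)%:E) = (fun w => k%:E * G w)%E by apply/funext => w; rewrite EFinM.
rewrite integralE [in RHS]integralE.
have mGp : measurable_fun setT (G^\+)%E by exact: measurable_funepos.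
have mGn : measurable_fun setT (G^\-)%E by exact: measurable_funeneg.
have [k0|k0] := leP 0 k.
  rewrite ge0_funeposM // ge0_funenegM //.
  rewrite !ge0_integralZl_EFin //; try by move=> x _; [exact: funepos_ge0|exact: funeneg_ge0].
  by apply: hA => //; apply: integral_ge0 => x _; [exact: funepos_ge0|exact: funeneg_ge0].
rewrite le0_funeposM ?ltW // le0_funenegM ?ltW //.
rewrite -!EFinN.
rewrite !ge0_integralZl_EFin //; try by move=> x _; [exact: funepos_ge0|exact: funeneg_ge0].
all: try by rewrite oppr_ge0 ltW.
have hp : (0 <= \int[P]_x G^\+ x)%E by apply: integral_ge0 => x _; exact: funepos_ge0.
have hn : (0 <= \int[P]_x G^\- x)%E by apply: integral_ge0 => x _; exact: funeneg_ge0.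
have nk : 0 <= - k by rewrite oppr_ge0 ltW.
rewrite (hA nk hn hp) (hB hp hn) mulrNN.
by [].
Qed.


Section Alg.
Variable R : realType.
Variables i1 j1 k1 i2 j2 k2 : R.
Let mu1 : quat R := Quat 0 i1 j1 k1.
Let mu2 : quat R := Quat 0 i2 j2 k2.
Hypothesis N1 : qnorm2 mu1 = 1.
Hypothesis N2 : qnorm2 mu2 = 1.
Hypothesis D12 : qdot mu1 mu2 = 0.

Definition cpx (x y : R) : quat R := qadd (qreal x) (qscale y (Quat 0 i1 j1 k1)).

Lemma cmul x y u v : qmul (cpx x y) (qconj (cpx u v)) = cpx (x*u + y*v) (y*u - x*v).
Proof.
have e : qmul (cpx x y) (qconj (cpx u v)) = cpx (x*u + y*v * qnorm2 mu1) (y*u - x*v).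
  rewrite /cpx /qmul /qconj /qadd /qreal /qscale /qnorm2 /qdot /=; congr Quat; ring.
by rewrite e N1 mulr1.
Qed.

Lemma cconj u v : qconj (cpx u v) = cpx u (- v).
Proof. rewrite /cpx /qconj /qadd /qreal /qscale /=; congr Quat; ring. Qed.

Lemma ppconj (p : quat R) : qmul p (qconj p) = qreal (qnorm2 p).
Proof. case: p => a b c e; rewrite /qmul /qconj /qreal /qnorm2 /qdot /=; congr Quat; ring. Qed.

Lemma cpx00 : cpx 0 0 = qzero R.
Proof. rewrite /cpx /qzero /qadd /qreal /qscale /=; congr Quat; ring. Qed.

Lemma E3 a b c e :
  let x := qadd (cpx a b) (qmul (cpx c e) mu2) in
  ((qr x, qdot x mu1), (qdot x mu2, qdot x (qmul mu1 mu2))) = ((a, b), (c, e)).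
Proof.
move=> x.
have h1 : qr x = a - e * qdot mu1 mu2.
  rewrite /x /cpx /qmul /qadd /qreal /qscale /qdot /=; ring.
have h2 : qdot x mu1 = b * qnorm2 mu1 + c * qdot mu1 mu2.
  rewrite /x /cpx /qmul /qadd /qreal /qscale /qnorm2 /qdot /=; ring.
have h3 : qdot x mu2 = b * qdot mu1 mu2 + c * qnorm2 mu2.
  rewrite /x /cpx /qmul /qadd /qreal /qscale /qnorm2 /qdot /=; ring.
have h4 : qdot x (qmul mu1 mu2) = - a * qdot mu1 mu2 + e * (qnorm2 mu1 * qnorm2 mu2).
  rewrite /x /cpx /qmul /qadd /qreal /qscale /qnorm2 /qdot /=; ring.
by rewrite h1 h2 h3 h4 N1 N2 D12; congr (_, _); congr (_, _); ring.
Qed.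

Lemma E2 (x : quat R) :
  let x' := qmul mu1 x in
  ((qr x', qdot x' mu1), (qdot x' mu2, qdot x' (qmul mu1 mu2))) =
  ((- qdot x mu1, qr x), (- qdot x (qmul mu1 mu2), qdot x mu2)).
Proof.
move=> x'.
have h1 : qr x' = - qdot x mu1.
  rewrite /x' /qmul /qdot /=; ring.
have h2 : qdot x' mu1 = qnorm2 mu1 * qr x.
  rewrite /x' /qmul /qnorm2 /qdot /=; ring.
have h3 : qdot x' mu2 = - qdot x (qmul mu1 mu2).
  rewrite /x' /qmul /qnorm2 /qdot /=; ring.
have h4 : qdot x' (qmul mu1 mu2) = qnorm2 mu1 * qdot x mu2.
  rewrite /x' /qmul /qnorm2 /qdot /=; ring.
by rewrite h1 h2 h3 h4 N1 !mul1r.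
Qed.

End Alg.

Definition sel (R : realType) (i : nat) (y : (R * R) * (R * R)) : R * R :=
  match i with
  | 0 => (y.1.1, y.1.2)
  | 1 => (y.1.1, - y.1.2)
  | 2 => (y.2.1, y.2.2)
  | _ => (y.2.1, - y.2.2)
  end.
Definition hX (R : realType) i j (y : (R * R) * (R * R)) : R :=
  (sel i y).1 * (sel j y).1 + (sel i y).2 * (sel j y).2.
Definition hY (R : realType) i j (y : (R * R) * (R * R)) : R :=
  (sel i y).2 * (sel j y).1 - (sel i y).1 * (sel j y).2.
Definition rot (R : realType) (y : (R * R) * (R * R)) : (R * R) * (R * R) :=
  ((- y.1.2, y.1.1), (- y.2.2, y.2.1)).

Lemma msel1 (R : realType) i : measurable_fun setT (fun y : (R * R) * (R * R) => (sel i y).1).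
Proof.
case: i => [|[|[|i]]] /=.
- exact: (measurableT_comp measurable_fst measurable_fst).
- exact: (measurableT_comp measurable_fst measurable_fst).
- exact: (measurableT_comp measurable_fst measurable_snd).
- exact: (measurableT_comp measurable_fst measurable_snd).
Qed.

Lemma msel2 (R : realType) i : measurable_fun setT (fun y : (R * R) * (R * R) => (sel i y).2).
Proof.
case: i => [|[|[|i]]] /=.
- exact: (measurableT_comp measurable_snd measurable_fst).
- apply: measurable_funN; exact: (measurableT_comp measurable_snd measurable_fst).
- exact: (measurableT_comp measurable_snd measurable_snd).
- apply: measurable_funN; exact: (measurableT_comp measurable_snd measurable_snd).
Qed.

Lemma mhX (R : realType) i j : measurable_fun setT (@hX R i j).
Proof.
rewrite /hX; apply: measurable_funD; apply: measurable_funM;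
  (exact: msel1 || exact: msel2).
Qed.

Lemma mhY (R : realType) i j : measurable_fun setT (@hY R i j).
Proof.
rewrite /hY; apply: measurable_funB; apply: measurable_funM;
  (exact: msel1 || exact: msel2).
Qed.

Lemma mrot (R : realType) : measurable_fun setT (@rot R).
Proof.
rewrite /rot; apply: measurable_fun_pair; apply: measurable_fun_pair.
- apply: measurable_funN; exact: (measurableT_comp measurable_snd measurable_fst).
- exact: (measurableT_comp measurable_fst measurable_fst).
- apply: measurable_funN; exact: (measurableT_comp measurable_snd measurable_snd).
- exact: (measurableT_comp measurable_fst measurable_snd).
Qed.

Lemma mlin (R : realType) (c0 c1 c2 c3 : R) : measurable_fun setT
  (fun y : (R * R) * (R * R) => y.1.1 * c0 + y.1.2 * c1 + y.2.1 * c2 + y.2.2 * c3).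
Proof.
apply: measurable_funD; [apply: measurable_funD; [apply: measurable_funD|]|];
  apply: measurable_funM; try exact: measurable_cst.
exact: (msel1 0). exact: (msel2 0). exact: (msel1 2). exact: (msel2 2).
Qed.
Lemma qexpect_cpx d (T : measurableType d) (R : realType) (P : probability T R)
  (i1 j1 k1 : R) (X Y : T -> R) : measurable_fun setT Y ->
  qexpect P (fun w => cpx i1 j1 k1 (X w) (Y w)) =
  cpx i1 j1 k1 (fine ('E_P[X])%E) (fine ('E_P[Y])%E).
Proof.
move=> mY.
rewrite /qexpect /cpx /qadd /qreal /qscale /=.
have eq0 : forall c : R, (fun w => c * Y w) = (fun w => c * Y w) by [].
congr Quat.
- have -> : qr \o (fun w => Quat (X w + Y w * 0) (0 + Y w * i1) (0 + Y w * j1) (0 + Y w * k1)) = X.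
    by apply/funext => w /=; rewrite mulr0 addr0.
  by rewrite mulr0 addr0.
- have -> : qi \o (fun w => Quat (X w + Y w * 0) (0 + Y w * i1) (0 + Y w * j1) (0 + Y w * k1)) = (fun w => i1 * Y w).
    by apply/funext => w /=; rewrite add0r mulrC.
  by rewrite fine_scale // add0r mulrC.
- have -> : qj \o (fun w => Quat (X w + Y w * 0) (0 + Y w * i1) (0 + Y w * j1) (0 + Y w * k1)) = (fun w => j1 * Y w).
    by apply/funext => w /=; rewrite add0r mulrC.
  by rewrite fine_scale // add0r mulrC.
- have -> : qk \o (fun w => Quat (X w + Y w * 0) (0 + Y w * i1) (0 + Y w * j1) (0 + Y w * k1)) = (fun w => k1 * Y w).
    by apply/funext => w /=; rewrite add0r mulrC.
  by rewrite fine_scale // add0r mulrC.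
Qed.


Definition Uf (R : realType) (mu1 mu2 x : quat R) : (R * R) * (R * R) :=
  ((qr x, qdot x mu1), (qdot x mu2, qdot x (qmul mu1 mu2))).
Arguments Uf : simpl never.

Unset Implicit Arguments.
Close Scope classical_set_scope.

Theorem mainTheorem4 (d : measure_display) (T : measurableType d) (R : realType)
  (P : probability T R) (mu1 mu2 : quat R) (q z1 z2 : T -> quat R) :
  quat_basis mu1 mu2 ->
  (forall w, in_Cmu mu1 (z1 w)) -> (forall w, in_Cmu mu1 (z2 w)) ->
  (forall w, q w = qadd (z1 w) (qmul (z2 w) mu2)) ->
  quat_gaussian P q ->
  centered P q ->
  quat_eq_dist P q (fun w => qmul mu1 (q w)) ->
  let qC := fun w (i : 'I_4) =>
    nth (qzero R) [:: z1 w; qconj (z1 w); z2 w; qconj (z2 w)] i in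
  let sigma2 := qexpect P (fun w => qreal (qnorm2 (z1 w))) in
  let varsigma2 := qexpect P (fun w => qreal (qnorm2 (z2 w))) in
  let omega := qexpect P (fun w => qmul (z1 w) (qconj (z2 w))) in
  let o := qzero R in
  in_Cmu mu1 omega /\
  \matrix_(i < 4, j < 4) qexpect P (fun w => qmul (qC w i) (qconj (qC w j)))
  = \matrix_(i < 4, j < 4)
      nth o (nth [::] [:: [:: sigma2; o; omega; o];
                          [:: o; sigma2; o; qconj omega];
                          [:: qconj omega; o; varsigma2; o];
                          [:: o; omega; o; varsigma2]] i) j.
Proof.
Local Open Scope classical_set_scope.
case: mu1 => m0 i1 j1 k1; case: mu2 => n0 i2 j2 k2.
move=> [pu1 pu2 un1 un2 d12] hz1 hz2 hq [[mr mi mj mk] _] _ hdist.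
rewrite /pure /= in pu1 pu2; subst m0 n0.
move=> qC sigma2 varsigma2 omega o.
set mu1 := Quat 0 i1 j1 k1; set mu2 := Quat 0 i2 j2 k2.
pose U := fun w => Uf mu1 mu2 (q w).
have mdot : forall c : quat R, measurable_fun setT (fun w => qdot (q w) c).
  move=> c; rewrite /qdot.
  apply: measurable_funD; [apply: measurable_funD; [apply: measurable_funD|]|];
    apply: measurable_funM; try exact: measurable_cst.
  exact: mr. exact: mi. exact: mj. exact: mk.
have mU : measurable_fun setT U.
  rewrite /U /Uf; apply: measurable_fun_pair; apply: measurable_fun_pair;
    try exact: mdot.
  exact: mr.
have hz : forall w, z1 w = cpx i1 j1 k1 (U w).1.1 (U w).1.2 /\
                    z2 w = cpx i1 j1 k1 (U w).2.1 (U w).2.2.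
  move=> w; have [a [b ea]] := hz1 w; have [c [e ec]] := hz2 w.
  have hU : U w = ((a, b), (c, e)).
    rewrite /U /Uf hq ea ec; exact: (E3 un1 un2 d12 a b c e).
  by rewrite hU /=; split.
pose L := fun y : (R * R) * (R * R) => Uf mu1 mu2 (Quat y.1.1 y.1.2 y.2.1 y.2.2).
have mL : measurable_fun setT L.
  rewrite /L /Uf /qdot /=.
  apply: measurable_fun_pair; apply: measurable_fun_pair; try exact: mlin.
  exact: (msel1 0).
have dist : forall A, measurable A -> P (U @^-1` A) = P ((@rot R \o U) @^-1` A).
  move=> A mA.
  have mLA : measurable (L @^-1` A) by rewrite -[L @^-1` A]setTI; exact: mL measurableT A mA.
  have e1 : U @^-1` A = (@vec4 R \o q) @^-1` (L @^-1` A) by [].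
  have e2 : (@rot R \o U) @^-1` A = (@vec4 R \o (fun w => qmul mu1 (q w))) @^-1` (L @^-1` A).
    apply/funext => w /=; congr A.
    exact: (esym (E2 i2 j2 k2 un1 (q w))).
  by rewrite e1 e2; exact: hdist.
have qCs : forall w (i : 'I_4), qC w i = cpx i1 j1 k1 (sel i (U w)).1 (sel i (U w)).2.
  move=> w i; have [h1 h2] := hz w; rewrite /qC.
  case: i => [[|[|[|[|n]]]] Hi] /=; rewrite ?h1 ?h2 ?cconj //.
pose eX := fun i j : nat => fine ('E_P[fun w => hX i j (U w)])%E.
pose eY := fun i j : nat => fine ('E_P[fun w => hY i j (U w)])%E.
have ent : forall i j : 'I_4, qexpect P (fun w => qmul (qC w i) (qconj (qC w j))) =
    cpx i1 j1 k1 (eX i j) (eY i j).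
  move=> i j.
  have -> : (fun w => qmul (qC w i) (qconj (qC w j))) =
            (fun w => cpx i1 j1 k1 (hX i j (U w)) (hY i j (U w))).
    by apply/funext => w; rewrite !qCs (cmul un1).
  apply: qexpect_cpx; exact: (measurableT_comp (mhY _ _) mU).
have z0 : forall i j : nat, (forall y, @hX R i j (rot y) = - hX i j y) ->
    (forall y, @hY R i j (rot y) = - hY i j y) -> cpx i1 j1 k1 (eX i j) (eY i j) = qzero R.
  move=> i j hx hy.
  have -> : eX i j = 0 := sym_zero (P:=P) mU (@mrot R) (@mhX R i j) dist hx.
  have -> : eY i j = 0 := sym_zero (P:=P) mU (@mrot R) (@mhY R i j) dist hy.
  exact: cpx00.
have eqE : forall F G : T -> R, F =1 G -> fine ('E_P[F])%E = fine ('E_P[G])%E.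
  by move=> F G fg; rewrite (funext fg).
have hs : sigma2 = cpx i1 j1 k1 (eX 0 0) (eY 0 0).
  rewrite /sigma2 -(ent ord0 ord0); congr (qexpect P _); apply/funext => w.
  by rewrite /qC /= ppconj.
have hv : varsigma2 = cpx i1 j1 k1 (eX 2 2) (eY 2 2).
  rewrite /varsigma2 -(ent (@Ordinal 4 2 isT) (@Ordinal 4 2 isT)); congr (qexpect P _); apply/funext => w.
  by rewrite /qC /= ppconj.
have ho : omega = cpx i1 j1 k1 (eX 0 2) (eY 0 2).
  by rewrite /omega -(ent ord0 (@Ordinal 4 2 isT)).
split.
  by exists (eX 0 2), (eY 0 2); rewrite ho.
apply/matrixP => i j; rewrite !mxE ent.
case: i => [[|[|[|[|i]]]] Hi]; last by have := Hi; rewrite !ltnS ltn0.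
all: case: j => [[|[|[|[|j]]]] Hj]; last by have := Hj; rewrite !ltnS ltn0.
all: rewrite /=.
all: try (rewrite z0; [by [] | move=> y; rewrite /hX /sel /rot /=; ring
                            | move=> y; rewrite /hY /sel /rot /=; ring]).
all: rewrite ?hs ?hv ?ho ?cconj; congr cpx.
all: rewrite /eX /eY.
all: try (apply: eqE => w; rewrite /hX /hY /sel /=; ring).
all: rewrite -mulN1r -fine_scale; [apply: eqE => w; rewrite /hY /sel /=; ring
                                  | exact: measurableT_comp (mhY _ _) mU].
Qed.
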